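(* Let $m\in\mathcal{P}(\mathcal{S})$ be such that $Q^d(m)$ is irreducible for every deterministic stationary strategy $d\in D^s$. Then $\det(\tilde{Q}^\pi(m))\neq 0$ for all $\pi\in\Pi^s$, and $\det(\tilde{Q}^\pi(m))$ has the same sign for all $\pi\in\Pi^s$.
   Context: $\mathcal{S}=\{1,\dots,S\}$ ($S>1$), $\mathcal{A}=\{1,\dots,A\}$; for each $a$ and $m\in\mathcal{P}(\mathcal{S})$, $(Q_{ija}(m))_{i,j}$ is a conservative generator (off-diagonal $\ge0$, zero row sums). $\Pi^s$: stationary strategies, i.e. matrices $(\pi_{ia})$ with rows in $\mathcal{P}(\mathcal{A})$; $D^s\subseteq\Pi^s$: deterministic ones ($\pi_{ia}\in\{0,1\}$), identified with maps $d:\mathcal{S}\to\mathcal{A}$. $Q^\pi(m)_{ij}=\sum_aQ_{ija}(m)\pi_{ia}$. $\tilde{Q}^\pi(m)$ is $(Q^\pi(m))^T$ with its last row replaced by $(1,\dots,1)$. Irreducible: the directed graph with an edge $i\to j$ ($i\ne j$) whenever the $(i,j)$ entry is positive is strongly connected. *)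

(* Defs.v *)
From HB Require Import structures.
From mathcomp Require Import all_boot all_order all_algebra.
Set Implicit Arguments. Unset Strict Implicit. Unset Printing Implicit Defensive.
Import Order.TTheory GRing.Theory Num.Theory.
Local Open Scope ring_scope.

Section Defs.
Variable R : realFieldType.

Definition prob_vec (S : nat) (m : 'rV[R]_S) : Prop :=
  (forall i, 0 <= m 0 i) /\ \sum_i m 0 i = 1.

Definition conservative_generator (S : nat) (M : 'M[R]_S) : Prop :=
  (forall i j, i != j -> 0 <= M i j) /\ (forall i, \sum_j M i j = 0).

Definition stationary (S A : nat) (pi : 'M[R]_(S, A)) : Prop :=
  (forall i a, 0 <= pi i a) /\ (forall i, \sum_a pi i a = 1).

Definition det_strategy (S A : nat) (d : 'I_S -> 'I_A) : 'M[R]_(S, A) :=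
  \matrix_(i, a) (d i == a)%:R.

Definition Qpi (S A : nat) (Q : 'rV[R]_S -> 'I_A -> 'M[R]_S)
  (m : 'rV[R]_S) (pi : 'M[R]_(S, A)) : 'M[R]_S :=
  \matrix_(i, j) \sum_a Q m a i j * pi i a.

Definition Qtilde (S : nat) (M : 'M[R]_S) : 'M[R]_S :=
  \matrix_(i, j) if (i : nat) == S.-1 then 1 else M j i.

Definition irreducible_mx (S : nat) (M : 'M[R]_S) : Prop :=
  forall i j : 'I_S, connect (fun k l : 'I_S => (k != l) && (0 < M k l)) i j.

End Defs.

(* Main.v *)
Require Import Defs.
From HB Require Import structures.
From mathcomp Require Import all_boot all_order all_algebra.
From mathcomp Require Import ring lra.
Set Implicit Arguments. Unset Strict Implicit. Unset Printing Implicit Defensive.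
Import Order.TTheory GRing.Theory Num.Theory.
Local Open Scope ring_scope.

Section Aux.
Variable R : realFieldType.

Lemma gen_sum_shift (S : nat) (G : 'M[R]_S) (z : 'I_S -> R) k :
  conservative_generator G ->
  \sum_l G k l * z l = \sum_l G k l * (z l - z k).
Proof.
move=> [_ hs].
under [RHS]eq_bigr do rewrite mulrBr.
by rewrite sumrB -mulr_suml hs mul0r subr0.
Qed.

Lemma gen_max_le (S : nat) (G : 'M[R]_S) (z : 'I_S -> R) k :
  conservative_generator G -> (forall l, z l <= z k) ->
  \sum_l G k l * z l <= 0.
Proof.
move=> hG hm; rewrite gen_sum_shift //.
apply: sumr_le0 => l _.
have [->|nlk] := eqVneq l k; first by rewrite subrr mulr0.
by rewrite mulr_ge0_le0 // ?subr_le0 // hG.1 // eq_sym.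
Qed.

Lemma gen_min_ge (S : nat) (G : 'M[R]_S) (z : 'I_S -> R) k :
  conservative_generator G -> (forall l, z k <= z l) ->
  0 <= \sum_l G k l * z l.
Proof.
move=> hG hm; rewrite gen_sum_shift //.
apply: sumr_ge0 => l _.
have [->|nlk] := eqVneq l k; first by rewrite subrr mulr0.
by rewrite mulr_ge0 // ?subr_ge0 // hG.1 // eq_sym.
Qed.

Lemma gen_max_edge (S : nat) (G : 'M[R]_S) (z : 'I_S -> R) k l :
  conservative_generator G -> (forall l, z l <= z k) ->
  \sum_l G k l * z l = 0 -> k != l -> 0 < G k l -> z l = z k.
Proof.
move=> hG hm h0 nkl Gp.
rewrite gen_sum_shift // in h0.
have h1 : \sum_l' - (G k l' * (z l' - z k)) = 0 by rewrite sumrN h0 oppr0.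
have nn : forall i, predT i -> 0 <= - (G k i * (z i - z k)).
  move=> i _; have [->|nik] := eqVneq i k; first by rewrite subrr mulr0 oppr0.
  by rewrite oppr_ge0 mulr_ge0_le0 // ?subr_le0 // hG.1 // eq_sym.
have /eqP := psumr_eq0P nn h1 (isT : predT l).
by rewrite oppr_eq0 mulf_eq0 (gt_eqF Gp) /= subr_eq0 => /eqP.
Qed.

Lemma irr_const (S : nat) (G : 'M[R]_S) (z : 'I_S -> R) (i0 : 'I_S) :
  conservative_generator G -> irreducible_mx G ->
  (forall k, \sum_l G k l * z l = 0) -> forall j, z j = z i0.
Proof.
move=> hG hI h0.
set im := [arg max_(i > i0) z i]%O.
have hmax : forall l, z l <= z im.
  by rewrite /im; case: (arg_maxP z (isT : predT i0)) => i _ H l; apply: H.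
suff H : forall j, z j = z im by move=> j; rewrite H (H i0).
move=> j; have /connectP [p pth ->] := hI im j.
elim: p im hmax pth => [|x p IH] k hk //= /andP [/andP [nkx Gp] pth].
have ex : z x = z k by apply: gen_max_edge nkx Gp.
rewrite (IH x) // => l; by rewrite ex.
Qed.
End Aux.

Lemma tilde_nonsing (R : realFieldType) (S : nat) (hS : (1 < S)%N) (G : 'M[R]_S) :
  conservative_generator G -> irreducible_mx G -> \det (Qtilde G) != 0.
Proof.
move=> hG hI; apply/negP => /det0P [y ny0 hy].
have hl : (S.-1 < S)%N by rewrite ltn_predL ltnW.
pose lst : 'I_S := Ordinal hl.
pose z i := if i == lst then 0 else y 0 i.
pose c := - y 0 lst.
have hGz : forall j, \sum_l G j l * z l = c.
  move=> j; have := congr1 (fun M : 'M[R]_(1,S) => M 0 j) hy; rewrite !mxE.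
  rewrite (bigD1 lst) //= mxE eqxx mulr1 => /eqP; rewrite addrC addr_eq0 => /eqP hc.
  rewrite /c -hc.
  rewrite (bigD1 lst) //= /z eqxx mulr0 add0r.
  apply: eq_bigr => i nil; rewrite mxE (negbTE nil) mulrC.
  have -> : ((i : nat) == S.-1) = false.
    by apply/negbTE; apply: contra nil => /eqP e; apply/eqP/val_inj.
  by [].
have c0 : c = 0.
  apply/eqP; rewrite eq_le; apply/andP; split.
  - set im := [arg max_(i > lst) z i]%O.
    have hmax : forall l, z l <= z im.
      by rewrite /im; case: (arg_maxP z (isT : predT lst)) => i _ H l; apply: H.
    by rewrite -(hGz im); apply: gen_max_le.
  - set im := [arg min_(i < lst) z i]%O.
    have hmin : forall l, z im <= z l.
      by rewrite /im; case: (arg_minP z (isT : predT lst)) => i _ H l; apply: H.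
    by rewrite -(hGz im); apply: gen_min_ge.
have zc := irr_const lst hG hI (fun k => etrans (hGz k) c0).
move/eqP: ny0; apply; apply/rowP => i; rewrite mxE.
have [->|nil] := eqVneq i lst.
  by move: c0; rewrite /c => /eqP; rewrite oppr_eq0 => /eqP.
by have := zc i; rewrite /z (negbTE nil) eqxx.
Qed.

Section S3.
Variables (R : realFieldType) (S A : nat) (Q : 'rV[R]_S -> 'I_A -> 'M[R]_S) (m : 'rV[R]_S).
Hypothesis hG : forall a, conservative_generator (Q m a).

Lemma Qpi_gen pi : stationary pi -> conservative_generator (Qpi Q m pi).
Proof.
move=> [p0 p1]; split.
- move=> i j nij; rewrite mxE; apply: sumr_ge0 => a _.
  by rewrite mulr_ge0 // (hG a).1.
- move=> i; under eq_bigr do rewrite mxE.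
  rewrite exchange_big /= big1 // => a _.
  by rewrite -mulr_suml (hG a).2 mul0r.
Qed.

Lemma Qpi_irr pi : stationary pi ->
  (forall d : 'I_S -> 'I_A, irreducible_mx (Qpi Q m (det_strategy R d))) ->
  irreducible_mx (Qpi Q m pi).
Proof.
move=> [p0 p1] hirr.
have ex : forall i, exists a, 0 < pi i a.
  move=> i; apply/existsP; apply: contraT; rewrite negb_exists => /forallP hn.
  have : \sum_a pi i a <= 0.
    by apply: sumr_le0 => a _; have := hn a; rewrite -leNgt.
  by rewrite p1 ler10.
pose d i := xchoose (ex i).
have hd : forall i, 0 < pi i (d i) by move=> i; exact: xchooseP (ex i).
move=> i j; apply: connect_sub (hirr d i j) => k l /andP [nkl].
rewrite mxE => hp; apply: connect1; rewrite nkl /=.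
rewrite mxE (bigD1 (d k)) //= ltr_pwDl //.
- apply: mulr_gt0 (hd k); move: hp; rewrite (bigD1 (d k)) //= mxE eqxx mulr1.
  rewrite big1 ?addr0 // => a nad; rewrite mxE eq_sym (negbTE nad) mulr0 //.
- by apply: sumr_ge0 => a _; rewrite mulr_ge0 // (hG a).1.
Qed.
End S3.

Section S4.
Variables (R : realFieldType) (S A : nat) (Q : 'rV[R]_S -> 'I_A -> 'M[R]_S) (m : 'rV[R]_S).

Definition fdet (pi : 'M[R]_(S, A)) := \det (Qtilde (Qpi Q m pi)).
Definition comb (t : R) (P P' : 'M[R]_(S, A)) := \matrix_(i, a) ((1 - t) * P i a + t * P' i a).

Lemma fdet_affine (P P' : 'M[R]_(S, A)) (j : 'I_S) t :
  (forall k a, k != j -> P k a = P' k a) ->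
  fdet (comb t P P') = (1 - t) * fdet P + t * fdet P'.
Proof.
move=> hPP; rewrite /fdet -!(det_tr (Qtilde _)).
apply: (determinant_multilinear (i0 := j)).
- apply/rowP => i; rewrite !mxE.
  case: ifP => _; first by rewrite !mulr1 subrK.
  rewrite mulr_sumr mulr_sumr -big_split /=.
  by apply: eq_bigr => a _; rewrite ?mxE; ring.
- apply/matrixP => k i; rewrite ?mxE; case: ifP => // _; rewrite ?mxE.
  apply: eq_bigr => a _; rewrite ?mxE hPP -?mulrDl ?subrK ?mul1r // eq_sym neq_lift.
  by [].
- apply/matrixP => k i; rewrite ?mxE; case: ifP => // _; rewrite ?mxE.
  apply: eq_bigr => a _; rewrite ?mxE -hPP -?mulrDl ?subrK ?mul1r // eq_sym neq_lift.
  by [].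
Qed.

Lemma comb_stat P P' t : stationary P -> stationary P' -> 0 <= t <= 1 ->
  stationary (comb t P P').
Proof.
move=> [p0 p1] [q0 q1] /andP [t0 t1]; split.
- move=> i a; rewrite mxE addr_ge0 // mulr_ge0 // subr_ge0 //.
- move=> i; under eq_bigr do rewrite mxE.
  by rewrite big_split /= -!mulr_sumr p1 q1 !mulr1 subrK.
Qed.
End S4.

Theorem mainTheorem7 (R : realFieldType) (S A : nat) (hS : (1 < S)%N)
  (Q : 'rV[R]_S -> 'I_A -> 'M[R]_S)
  (hQ : forall (mm : 'rV[R]_S) (a : 'I_A), prob_vec mm ->
          conservative_generator (Q mm a))
  (m : 'rV[R]_S) (hm : prob_vec m)
  (hirr : forall d : 'I_S -> 'I_A, irreducible_mx (Qpi Q m (det_strategy R d))) :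
  (forall pi : 'M[R]_(S, A), stationary pi -> \det (Qtilde (Qpi Q m pi)) != 0) /\
  (forall pi1 pi2 : 'M[R]_(S, A), stationary pi1 -> stationary pi2 ->
     Num.sg (\det (Qtilde (Qpi Q m pi1))) = Num.sg (\det (Qtilde (Qpi Q m pi2)))).
Proof.
have hG : forall a, conservative_generator (Q m a) by move=> a; exact: hQ.
have ns : forall pi : 'M[R]_(S, A), stationary pi -> fdet Q m pi != 0.
  move=> pi hpi; apply: tilde_nonsing => //.
    exact: Qpi_gen.
  exact: Qpi_irr.
split; first exact: ns.
have core : forall P P' (j : 'I_S), stationary P -> stationary P' ->
    (forall k a, k != j -> P k a = P' k a) ->
    0 < fdet Q m P -> fdet Q m P' < 0 -> False.
  move=> P P' j sP sP' hPP ha hb.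
  set a := fdet Q m P in ha *; set b := fdet Q m P' in hb *.
  have hab : 0 < a - b by rewrite subr_gt0 (lt_trans hb ha).
  pose t := a / (a - b).
  have t0 : 0 <= t by rewrite divr_ge0 // ltW.
  have t1 : t <= 1 by rewrite ler_pdivrMr // mul1r; lra.
  have := ns _ (comb_stat sP sP' (introT andP (conj t0 t1))).
  rewrite (fdet_affine _ _ _ hPP) -/a -/b.
  have -> : (1 - t) * a + t * b = 0.
    rewrite /t; field; exact: lt0r_neq0.
  by rewrite eqxx.
have step : forall P P' (j : 'I_S), stationary P -> stationary P' ->
    (forall k a, k != j -> P k a = P' k a) ->
    Num.sg (fdet Q m P) = Num.sg (fdet Q m P').
  move=> P P' j sP sP' hPP.
  have n1 := ns _ sP; have n2 := ns _ sP'.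
  have [h1|h1|h1] := ltgtP (fdet Q m P) 0; last by rewrite h1 eqxx in n1.
  - have [h2|h2|h2] := ltgtP (fdet Q m P') 0; last by rewrite h2 eqxx in n2.
    + by rewrite !ltr0_sg.
    + by case: (core _ _ j sP' sP (fun k a h => esym (hPP k a h)) h2 h1).
  - have [h2|h2|h2] := ltgtP (fdet Q m P') 0; last by rewrite h2 eqxx in n2.
    + by case: (core _ _ j sP sP' hPP h1 h2).
    + by rewrite !gtr0_sg.
move=> pi1 pi2 s1 s2.
pose pk (k : nat) := \matrix_(i, a) if (i < k)%N then pi2 i a else pi1 i a.
have spk : forall k, stationary (pk k).
  move: s1 s2 => [p0 p1] [q0 q1] k; split.
  - by move=> i a; rewrite mxE; case: ifP.
  - move=> i; rewrite (eq_bigr (fun a => if (i < k)%N then pi2 i a else pi1 i a)) => [|a _]; last by rewrite mxE.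
    by case: (i < k)%N.
have ind : forall k, (k <= S)%N -> Num.sg (fdet Q m pi1) = Num.sg (fdet Q m (pk k)).
  elim => [_|k IH hk].
    have -> : pk 0%N = pi1 by apply/matrixP => i a; rewrite mxE ltn0.
    by [].
  rewrite IH; last exact: ltnW.
  apply: (step _ _ (Ordinal hk) (spk k) (spk k.+1)) => i a nik.
  rewrite !mxE ltnS (leq_eqVlt i k).
  have -> : (i == k :> nat) = false.
    by apply/negbTE; apply: contra nik => /eqP e; apply/eqP/val_inj.
  by rewrite orFb.
have := ind S (leqnn S).
have -> : pk S = pi2 by apply/matrixP => i a; rewrite mxE ltn_ord.
by rewrite /fdet; apply.
Qed.
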